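(* Let $I$ be an index set and $P_r,Q_r\in GL(n,\mathbb R)$ for $r\in I$. There exists a $C^1$-diffeomorphism (respectively, a real-analytic diffeomorphism with real-analytic inverse) $f\colon\mathbb R^n\to\mathbb R^n$ with $f(P_rx)=Q_rf(x)$ for all $x\in\mathbb R^n$, $r\in I$, if and only if there exists $C\in GL(n,\mathbb R)$ with $CP_r=Q_rC$ for all $r\in I$. *)

(* Defs.v *)
From Stdlib Require Import Reals.
From mathcomp Require Import all_boot.
Set Implicit Arguments.
Local Open Scope R_scope. Unset Strict Implicit. Unset Printing Implicit Defensive.

Definition vec (n : nat) := 'I_n -> R.
Definition mat (n : nat) := 'I_n -> 'I_n -> R.

Definition vadd n (x y : vec n) : vec n := fun i => (x i + y i).
Definition vsub n (x y : vec n) : vec n := fun i => (x i - y i).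

Definition mulmv n (A : mat n) (x : vec n) : vec n :=
  fun i => \big[Rplus/0]_(j < n) (A i j * x j).
Definition mulmm n (A B : mat n) : mat n :=
  fun i k => \big[Rplus/0]_(j < n) (A i j * B j k).
Definition idmat n : mat n := fun i j => if i == j then 1 else 0.

Definition invertible n (A : mat n) : Prop :=
  exists B : mat n, mulmm A B = @idmat n /\ mulmm B A = @idmat n.

(* sup norm on R^n (all norms on R^n are equivalent) *)
Definition vnorm n (x : vec n) : R := \big[Rmax/0]_(i < n) Rabs (x i).

Definition frechet_at n (f : vec n -> vec n) (x : vec n) (L : mat n) : Prop :=
  forall eps : R, (0 < eps) -> exists delta : R, (0 < delta) /\
    forall h : vec n, (vnorm h < delta) ->
      (vnorm (vsub (vsub (f (vadd x h)) (f x)) (mulmv L h)) <= eps * vnorm h).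

Definition C1 n (f : vec n -> vec n) : Prop :=
  exists Df : vec n -> mat n,
    (forall x, frechet_at f x (Df x)) /\
    (forall x eps, (0 < eps) -> exists delta : R, (0 < delta) /\
       forall y, (vnorm (vsub y x) < delta) ->
         forall i j, (Rabs (Df y i j - Df x i j) < eps)).

(* Multivariate power series: partial sums over multi-indices of total
   degree <= K.  The term for multi-index a is  c a * (x - x0)^a. *)
Definition monom n (a : 'I_n -> nat) (y : vec n) : R :=
  \big[Rmult/1]_(i < n) (y i ^ a i).

Definition psum n (c : ('I_n -> nat) -> vec n) (x0 x : vec n) (K : nat) (i : 'I_n) : R :=
  \big[Rplus/0]_(a : {ffun 'I_n -> 'I_K.+1} | (\sum_(k < n) nat_of_ord (a k) <= K)%N)
     (c (fun k => nat_of_ord (a k)) i * monom (fun k => nat_of_ord (a k)) (vsub x x0)).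

Definition psum_abs n (c : ('I_n -> nat) -> vec n) (x0 x : vec n) (K : nat) (i : 'I_n) : R :=
  \big[Rplus/0]_(a : {ffun 'I_n -> 'I_K.+1} | (\sum_(k < n) nat_of_ord (a k) <= K)%N)
     (Rabs (c (fun k => nat_of_ord (a k)) i * monom (fun k => nat_of_ord (a k)) (vsub x x0))).

(* f is real-analytic: near every point x0 it equals an absolutely
   convergent power series centred at x0 *)
Definition analytic n (f : vec n -> vec n) : Prop :=
  forall x0 : vec n, exists (r : R) (c : ('I_n -> nat) -> vec n), (0 < r) /\
    forall x : vec n, (vnorm (vsub x x0) < r) -> forall i : 'I_n,
      Un_cv (fun K => psum c x0 x K i) (f x i) /\
      bound (fun y => exists K, y = psum_abs c x0 x K i).

Definition C1_diffeo n (f : vec n -> vec n) : Prop :=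
  exists g : vec n -> vec n,
    (forall x, g (f x) = x) /\ (forall y, f (g y) = y) /\ C1 f /\ C1 g.

Definition analytic_diffeo n (f : vec n -> vec n) : Prop :=
  exists g : vec n -> vec n,
    (forall x, g (f x) = x) /\ (forall y, f (g y) = y) /\ analytic f /\ analytic g.

(* Main.v *)
From HB Require Import structures.
From Stdlib Require Import Reals Lra Lia FunctionalExtensionality Classical ClassicalEpsilon.
From mathcomp Require Import all_boot.
Require Import Defs.
Set Implicit Arguments. Unset Strict Implicit. Unset Printing Implicit Defensive.
Local Open Scope R_scope.

HB.instance Definition _ := Monoid.isComLaw.Build R 0 Rplus (fun x y z => esym (Rplus_assoc x y z)) Rplus_comm Rplus_0_l.
HB.instance Definition _ := Monoid.isComLaw.Build R 1 Rmult (fun x y z => esym (Rmult_assoc x y z)) Rmult_comm Rmult_1_l.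

Lemma Rabs_sum (I : Type) (s : seq I) (P : pred I) (F : I -> R) :
  Rabs (\big[Rplus/0]_(i <- s | P i) F i) <= \big[Rplus/0]_(i <- s | P i) Rabs (F i).
Proof.
elim/big_rec2: _ => [|i y1 y2 _ H]; first by rewrite Rabs_R0; lra.
eapply Rle_trans; first exact: Rabs_triang. lra.
Qed.

Lemma sum_le (I : Type) (s : seq I) (P : pred I) (F G : I -> R) :
  (forall i, P i -> F i <= G i) ->
  \big[Rplus/0]_(i <- s | P i) F i <= \big[Rplus/0]_(i <- s | P i) G i.
Proof.
move=> H; elim/big_rec2: _ => [|i y1 y2 Pi Hy]; first lra.
have := H i Pi; lra.
Qed.

Lemma sum_ge0 (I : Type) (s : seq I) (P : pred I) (F : I -> R) :
  (forall i, P i -> 0 <= F i) -> 0 <= \big[Rplus/0]_(i <- s | P i) F i.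
Proof.
move=> H; elim/big_rec: _ => [|i y Pi Hy]; first lra.
have := H i Pi; lra.
Qed.

Lemma sum_mulr (I : Type) (s : seq I) (P : pred I) (F : I -> R) c :
  \big[Rplus/0]_(i <- s | P i) F i * c = \big[Rplus/0]_(i <- s | P i) (F i * c).
Proof.
elim/big_rec2: _ => [|i y1 y2 Pi <-]; first ring. ring.
Qed.

Lemma sum_mull (I : Type) (s : seq I) (P : pred I) (F : I -> R) c :
  c * \big[Rplus/0]_(i <- s | P i) F i = \big[Rplus/0]_(i <- s | P i) (c * F i).
Proof.
elim/big_rec2: _ => [|i y1 y2 Pi <-]; first ring. ring.
Qed.

Lemma sum_add (I : Type) (s : seq I) (P : pred I) (F G : I -> R) :
  \big[Rplus/0]_(i <- s | P i) (F i + G i) = \big[Rplus/0]_(i <- s | P i) F i + \big[Rplus/0]_(i <- s | P i) G i.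
Proof. by rewrite big_split. Qed.

Lemma sum_ge_term (I : finType) (F : I -> R) j :
  (forall i, 0 <= F i) -> F j <= \big[Rplus/0]_(i : I) F i.
Proof.
move=> H; rewrite (bigD1 j) //=.
have := @sum_ge0 _ (index_enum I) (fun i => i != j) F (fun i _ => H i). lra.
Qed.

Lemma bigmax_ge (I : eqType) (s : seq I) (F : I -> R) j :
  j \in s -> F j <= \big[Rmax/0]_(i <- s) F i.
Proof.
elim: s => //= a s IH; rewrite in_cons big_cons => /orP [/eqP->|H].
  apply Rmax_l.
eapply Rle_trans; [apply IH => //|apply Rmax_r].
Qed.

Lemma vnorm_ge0 n (x : vec n) : 0 <= vnorm x.
Proof.
rewrite /vnorm; elim/big_rec: _ => [|i y _ Hy]; first lra.
eapply Rle_trans; [exact Hy| apply Rmax_r].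
Qed.

Lemma coord_le n (x : vec n) i : Rabs (x i) <= vnorm x.
Proof. by apply: (bigmax_ge (fun i => Rabs (x i))); rewrite mem_index_enum. Qed.

Lemma vnorm_le n (x : vec n) B : 0 <= B -> (forall i, Rabs (x i) <= B) -> vnorm x <= B.
Proof.
move=> HB H; rewrite /vnorm; elim/big_rec: _ => [|i y _ Hy] //.
by apply Rmax_lub.
Qed.

Lemma vnorm_add n (x y : vec n) : vnorm (vadd x y) <= vnorm x + vnorm y.
Proof.
apply vnorm_le; first by have := vnorm_ge0 x; have := vnorm_ge0 y; lra.
move=> i; rewrite /vadd; eapply Rle_trans; first exact: Rabs_triang.
have := coord_le x i; have := coord_le y i; lra.
Qed.

Definition mnorm n (A : mat n) : R := \big[Rplus/0]_(i < n) \big[Rplus/0]_(j < n) Rabs (A i j).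

Lemma mnorm_ge0 n (A : mat n) : 0 <= mnorm A.
Proof. apply sum_ge0 => i _; apply sum_ge0 => j _; apply Rabs_pos. Qed.

Lemma mulmv_bound n (A : mat n) h : vnorm (mulmv A h) <= mnorm A * vnorm h.
Proof.
apply vnorm_le; first by apply Rmult_le_pos; [apply mnorm_ge0|apply vnorm_ge0].
move=> i; rewrite /mulmv; eapply Rle_trans; first exact: Rabs_sum.
apply Rle_trans with (\big[Rplus/0]_(j < n) Rabs (A i j) * vnorm h).
  rewrite sum_mulr; apply sum_le => j _; rewrite Rabs_mult.
  apply Rmult_le_compat_l; [apply Rabs_pos|apply coord_le].
apply Rmult_le_compat_r; first by apply vnorm_ge0.
apply (@sum_ge_term _ (fun i => \big[Rplus/0]_(j < n) Rabs (A i j))).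
move=> k; apply sum_ge0 => j _; apply Rabs_pos.
Qed.

Lemma sum_sub (I : Type) (s : seq I) (P : pred I) (F G : I -> R) :
  \big[Rplus/0]_(i <- s | P i) (F i - G i) = \big[Rplus/0]_(i <- s | P i) F i - \big[Rplus/0]_(i <- s | P i) G i.
Proof. elim/big_rec3: _ => [|i y1 y2 y3 _ ->]; ring. Qed.

Lemma mulmv_sub n (A : mat n) x y : mulmv A (vsub x y) = vsub (mulmv A x) (mulmv A y).
Proof.
apply functional_extensionality => i; rewrite /mulmv /vsub -sum_sub.
by apply eq_bigr => j _; ring.
Qed.

Lemma mulmv_mulmm n (A B : mat n) h : mulmv (mulmm A B) h = mulmv A (mulmv B h).
Proof.
apply functional_extensionality => i; rewrite /mulmv /mulmm.
under eq_bigr => k _ do rewrite sum_mulr.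
under [RHS]eq_bigr => j _ do rewrite sum_mull.
rewrite exchange_big /=; apply eq_bigr => j _; apply eq_bigr => k _; ring.
Qed.

Lemma mulmv_id n (x : vec n) : mulmv (@idmat n) x = x.
Proof.
apply functional_extensionality => i; rewrite /mulmv /idmat (bigD1 i) //= eqxx big1.
  ring.
by move=> j /negbTE; rewrite eq_sym => ->; ring.
Qed.

Lemma mulmv0 n (A : mat n) : mulmv A (fun _ => 0) = (fun _ => 0).
Proof.
apply functional_extensionality => i; rewrite /mulmv big1 //= => j _; ring.
Qed.

Definition ev n (k : 'I_n) (t : R) : vec n := fun j => if j == k then t else 0.

Lemma mulmv_ev n (A : mat n) k t i : mulmv A (ev k t) i = A i k * t.
Proof.
rewrite /mulmv /ev (bigD1 k) //= eqxx big1; first ring.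
by move=> j /negbTE ->; ring.
Qed.

Lemma vnorm_ev n (k : 'I_n) t : 0 <= t -> vnorm (ev k t) = t.
Proof.
move=> Ht; apply Rle_antisym.
  apply vnorm_le => // j; rewrite /ev; case: (j == k); rewrite ?Rabs_R0 ?Rabs_pos_eq; lra.
have := coord_le (ev k t) k; rewrite /ev eqxx Rabs_pos_eq //.
Qed.

Lemma frechet_unique n (f : vec n -> vec n) x A B :
  frechet_at f x A -> frechet_at f x B -> A = B.
Proof.
move=> HA HB; apply functional_extensionality => i; apply functional_extensionality => k.
apply NNPP => Hne.
set d := Rabs (A i k - B i k).
have dp : 0 < d by apply Rabs_pos_lt => H; apply Hne; lra.
have [d1 [d1p H1]] := HA (d/4) ltac:(lra).
have [d2 [d2p H2]] := HB (d/4) ltac:(lra).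
set t := Rmin d1 d2 / 2.
have tp : 0 < t by rewrite /t; have := Rmin_glb_lt _ _ _ d1p d2p; lra.
have vt := vnorm_ev k (Rlt_le _ _ tp).
have ht1 : vnorm (ev k t) < d1 by rewrite vt /t; have := Rmin_l d1 d2; lra.
have ht2 : vnorm (ev k t) < d2 by rewrite vt /t; have := Rmin_r d1 d2; lra.
have := H1 _ ht1; have := H2 _ ht2; rewrite vt => E2 E1.
have F1 : Rabs (f (vadd x (ev k t)) i - f x i - A i k * t) <= vnorm (vsub (vsub (f (vadd x (ev k t))) (f x)) (mulmv A (ev k t))).
  rewrite -mulmv_ev; exact: coord_le.
have F2 : Rabs (f (vadd x (ev k t)) i - f x i - B i k * t) <= vnorm (vsub (vsub (f (vadd x (ev k t))) (f x)) (mulmv B (ev k t))).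
  rewrite -mulmv_ev; exact: coord_le.
have : Rabs ((A i k - B i k) * t) <= d / 2 * t.
  replace ((A i k - B i k) * t) with
   (- ((f (vadd x (ev k t)) i - f x i - A i k * t)) + (f (vadd x (ev k t)) i - f x i - B i k * t)) by ring.
  eapply Rle_trans; first exact: Rabs_triang. rewrite Rabs_Ropp. lra.
rewrite Rabs_mult (Rabs_pos_eq t); last lra.
rewrite -/d => H. have : d * t <= d/2 * t by []. nra.
Qed.

Lemma frechet_lin n (A : mat n) x : frechet_at (mulmv A) x A.
Proof.
move=> eps Heps; exists 1; split; first lra. move=> h _.
have -> : vsub (vsub (mulmv A (vadd x h)) (mulmv A x)) (mulmv A h) = (fun _ => 0).
  apply functional_extensionality => i; rewrite /vsub /mulmv /vadd -!sum_sub big1 // => j _; ring.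
have -> : vnorm (fun _ : 'I_n => 0) = 0.
  apply Rle_antisym; last by apply vnorm_ge0.
  apply vnorm_le => [|j]; [lra|rewrite Rabs_R0; lra].
apply Rmult_le_pos; [lra|apply vnorm_ge0].
Qed.

Lemma frechet_comp n (f g : vec n -> vec n) x A B :
  frechet_at g x B -> frechet_at f (g x) A -> frechet_at (fun y => f (g y)) x (mulmm A B).
Proof.
move=> HB HA eps Heps.
have nAp := mnorm_ge0 A; have nBp := mnorm_ge0 B.
set nA := mnorm A in nAp *; set nB := mnorm B in nBp *.
have [d1 [d1p H1]] := HB 1 Rlt_0_1.
have e2p : 0 < eps / (2 * (nA + 1)) by apply Rdiv_lt_0_compat; lra.
have e3p : 0 < eps / (2 * (nB + 1)) by apply Rdiv_lt_0_compat; lra.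
have [d2 [d2p H2]] := HB _ e2p.
have [d3 [d3p H3]] := HA _ e3p.
have d3p' : 0 < d3 / (nB + 1) by apply Rdiv_lt_0_compat; lra.
exists (Rmin d1 (Rmin d2 (d3 / (nB + 1)))); split.
  by apply Rmin_glb_lt => //; apply Rmin_glb_lt.
move=> h Hh.
have h1 : vnorm h < d1 by have := Rmin_l d1 (Rmin d2 (d3 / (nB + 1))); lra.
have h2 : vnorm h < d2 by have := Rmin_r d1 (Rmin d2 (d3 / (nB + 1))); have := Rmin_l d2 (d3 / (nB + 1)); lra.
have h3 : vnorm h < d3 / (nB + 1) by have := Rmin_r d1 (Rmin d2 (d3 / (nB + 1))); have := Rmin_r d2 (d3 / (nB + 1)); lra.
have vp := vnorm_ge0 h.
set k := vsub (g (vadd x h)) (g x).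
have Hk : vnorm k <= (nB + 1) * vnorm h.
  have -> : k = vadd (vsub k (mulmv B h)) (mulmv B h).
    by apply functional_extensionality => i; rewrite /vadd /vsub; ring.
  eapply Rle_trans; first exact: vnorm_add.
  have := H1 h h1; rewrite -/k; have := mulmv_bound B h; rewrite -/nB; lra.
have eqg : g (vadd x h) = vadd (g x) k.
  by apply functional_extensionality => i; rewrite /k /vadd /vsub; ring.
have hk3 : vnorm k < d3.
  apply Rle_lt_trans with ((nB + 1) * vnorm h) => //.
  have := Rmult_lt_compat_l (nB + 1) _ _ ltac:(lra) h3.
  have -> : (nB + 1) * (d3 / (nB + 1)) = d3 by field; lra.
  done.
have R1 := H3 k hk3.
have R2 := H2 h h2.
have -> : vsub (vsub (f (g (vadd x h))) (f (g x))) (mulmv (mulmm A B) h) =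
   vadd (vsub (vsub (f (vadd (g x) k)) (f (g x))) (mulmv A k))
        (mulmv A (vsub k (mulmv B h))).
  rewrite eqg mulmv_mulmm mulmv_sub; apply functional_extensionality => i.
  rewrite /vadd /vsub; ring.
eapply Rle_trans; first exact: vnorm_add.
have := mulmv_bound A (vsub k (mulmv B h)); rewrite -/nA => R3.
have T1 : eps / (2 * (nB + 1)) * vnorm k <= eps / 2 * vnorm h.
  apply Rle_trans with (eps / (2 * (nB + 1)) * ((nB + 1) * vnorm h)).
    by apply Rmult_le_compat_l; lra.
  right; field; lra.
have T2 : nA * vnorm (vsub k (mulmv B h)) <= eps / 2 * vnorm h.
  apply Rle_trans with (nA * (eps / (2 * (nA + 1)) * vnorm h)).
    by apply Rmult_le_compat_l.
  have -> : nA * (eps / (2 * (nA + 1)) * vnorm h) = (nA / (nA + 1)) * (eps / 2 * vnorm h) by field; lra.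
  have q : nA / (nA + 1) <= 1 by apply (Rmult_le_reg_r (nA + 1)); [lra|]; rewrite /Rdiv Rmult_assoc Rinv_l; lra.
  have : 0 <= eps / 2 * vnorm h by apply Rmult_le_pos; lra.
  nra.
lra.
Qed.

Definition deg n K (a : {ffun 'I_n -> 'I_K.+1}) := (\sum_(k < n) nat_of_ord (a k))%N.
Definition ek n (k : 'I_n) : 'I_n -> nat := fun j => if j == k then 1%N else 0%N.
Definition Ek n K (k : 'I_n) : {ffun 'I_n -> 'I_K.+1} := [ffun j => if j == k then inord 1 else ord0].
Definition Z0 n K : {ffun 'I_n -> 'I_K.+1} := [ffun j => ord0].

Lemma Ek_val n K (k : 'I_n) j : (0 < K)%N -> nat_of_ord (Ek K k j) = ek k j.
Proof. by move=> HK; rewrite /Ek /ek ffunE; case: (j == k) => //=; rewrite inordK. Qed.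

Lemma deg_Ek n K (k : 'I_n) : (0 < K)%N -> deg (Ek K k) = 1%N.
Proof.
move=> HK; rewrite /deg (bigD1 k) //= Ek_val // /ek eqxx big1 // => j /negbTE Hj.
by rewrite Ek_val // /ek Hj.
Qed.

Lemma deg0 n K (a : {ffun 'I_n -> 'I_K.+1}) : (deg a == 0)%N = (a == Z0 n K).
Proof.
rewrite /deg sum_nat_eq0; apply/forallP/eqP => [H|->] /=.
  apply/ffunP => j; apply/val_inj; rewrite ffunE /=; have := H j; by move/eqP.
by move=> j; rewrite ffunE.
Qed.

Lemma deg1 n K (a : {ffun 'I_n -> 'I_K.+1}) (X : R) : (0 < K)%N ->
  \big[Rplus/0]_(k < n) (if a == Ek K k then X else 0) = if (deg a == 1)%N then X else 0.
Proof.
move=> HK; case: eqP => Hd; last first.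
  apply big1 => k _; case: eqP => // Ha; exfalso; apply Hd; by rewrite Ha deg_Ek.
case: (pickP (fun k => (0 < a k)%N)) => [k0 Hk0|Hn]; last first.
  exfalso; move: Hd; rewrite /deg big1 // => k _; have := Hn k; by case: (nat_of_ord (a k)).
have Hsplit := Hd; rewrite /deg (bigD1 k0) //= in Hsplit.
have Hk1 : nat_of_ord (a k0) = 1%N.
  apply/eqP; rewrite eqn_leq Hk0 andbT; rewrite -Hsplit; exact: leq_addr.
have Hrest : forall j, j != k0 -> nat_of_ord (a j) = 0%N.
  move=> j Hj; move: Hsplit; rewrite Hk1 add1n => /eqP; rewrite eqSS sum_nat_eq0 => /forallP /(_ j).
  by rewrite Hj => /eqP.
have Heq : forall k, (a == Ek K k) = (k == k0).
  move=> k; apply/eqP/eqP => [Ha|->].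
    apply/eqP; apply/negPn/negP => Hk.
    have : nat_of_ord (a k0) = nat_of_ord (Ek K k k0) by rewrite Ha.
    by rewrite Ek_val // /ek eq_sym (negbTE Hk) Hk1.
  apply/ffunP => j; apply/val_inj; rewrite /= Ek_val // /ek.
  case: eqP => [->//|/eqP]; exact: Hrest.
rewrite (bigD1 k0) //= Heq eqxx big1; first ring.
by move=> k /negbTE Hk; rewrite Heq Hk.
Qed.

Lemma Gdecomp n K (F : ('I_n -> nat) -> R) : (0 < K)%N ->
  \big[Rplus/0]_(a : {ffun 'I_n -> 'I_K.+1} | (deg a <= K)%N) F (fun k => nat_of_ord (a k))
  = F (fun _ => 0%N) + \big[Rplus/0]_(k < n) F (ek k)
    + \big[Rplus/0]_(a : {ffun 'I_n -> 'I_K.+1} | (deg a <= K)%N && (1 < deg a)%N) F (fun k => nat_of_ord (a k)).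
Proof.
move=> HK.
rewrite (bigID (fun a => (deg a <= 1)%N)) /=.
have -> : \big[Rplus/0]_(a : {ffun 'I_n -> 'I_K.+1} | (deg a <= K)%N && ~~ (deg a <= 1)%N) F (fun k => nat_of_ord (a k))
  = \big[Rplus/0]_(a : {ffun 'I_n -> 'I_K.+1} | (deg a <= K)%N && (1 < deg a)%N) F (fun k => nat_of_ord (a k)).
  by apply eq_bigl => a; rewrite ltnNge.
congr (_ + _).
rewrite (bigID (fun a => (deg a == 0)%N)) /=.
rewrite (@big_pred1 _ _ _ _ (Z0 n K)); last first.
  move=> a /=; rewrite deg0 andbC; case: (boolP (a == Z0 n K)) => //= /eqP ->.
  by apply/andP; split; rewrite /deg big1 // => j _; rewrite ffunE.
have -> : (fun k => nat_of_ord (Z0 n K k)) = (fun _ => 0%N).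
  by apply functional_extensionality => j; rewrite ffunE.
congr (_ + _).
have -> : \big[Rplus/0]_(k < n) F (ek k) =
   \big[Rplus/0]_(k < n) \big[Rplus/0]_(a : {ffun 'I_n -> 'I_K.+1}) (if a == Ek K k then F (fun j => nat_of_ord (a j)) else 0).
  apply eq_bigr => k _; rewrite -big_mkcond big_pred1_eq.
  congr F; apply functional_extensionality => j; by rewrite Ek_val.
rewrite exchange_big /=.
under [RHS]eq_bigr => a _ do rewrite (deg1 a (F (fun j => nat_of_ord (a j))) HK).
rewrite [RHS]big_mkcond /=; rewrite big_mkcond /=; apply eq_bigr => a _.
case: ifP => [/andP [/andP [H1 H2] H3]|]; first by rewrite eqn_leq H2 lt0n H3.
case: (boolP (deg a == 1%N)) => // /eqP Hd; rewrite Hd HK. by [].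
Qed.

Lemma key n (I : Type) (P Q : I -> mat n) (f g : vec n -> vec n) :
  (forall x, exists L, frechet_at f x L) -> (forall x, exists L, frechet_at g x L) ->
  (forall x, g (f x) = x) -> (forall y, f (g y) = y) ->
  (forall (x : vec n) (r : I), f (mulmv (P r) x) = mulmv (Q r) (f x)) ->
  exists C : mat n, invertible C /\ forall r : I, mulmm C (P r) = mulmm (Q r) C.
Proof.
move=> Df Dg gf fg eqv.
pose z : vec n := fun _ => 0.
have [L HL] := Df z.
have [M HM] := Dg (f z).
have Hid : forall x, frechet_at (fun y : vec n => y) x (@idmat n).
  move=> x; have := frechet_lin (@idmat n) x.
  have -> // : mulmv (@idmat n) = (fun y => y).
  by apply functional_extensionality => y; apply mulmv_id.
exists L; split.
  exists M; split.
    have HL' : frechet_at f (g (f z)) L by rewrite gf.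
    have := frechet_comp HM HL'.
    have -> : (fun y => f (g y)) = (fun y => y) by apply functional_extensionality.
    by move/frechet_unique; apply.
  have := frechet_comp HL HM.
  have -> : (fun y => g (f y)) = (fun y => y) by apply functional_extensionality.
  by move/frechet_unique; apply.
move=> r.
have HL' : frechet_at f (mulmv (P r) z) L by rewrite /z mulmv0.
have H1 := frechet_comp (frechet_lin (P r) z) HL'.
have H2 := frechet_comp HL (frechet_lin (Q r) (f z)).
have E : (fun y => f (mulmv (P r) y)) = (fun y => mulmv (Q r) (f y)).
  by apply functional_extensionality => y; apply eqv.
rewrite E in H1; exact: frechet_unique H1 H2.
Qed.

Lemma monom_abs n (a : 'I_n -> nat) h : Rabs (monom a h) <= vnorm h ^ (\sum_(k < n) a k)%N.
Proof.
rewrite /monom; elim/big_rec2: _ => [|i y1 y2 _ Hy]; first by rewrite Rabs_R1 /=; lra.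
rewrite pow_add Rabs_mult -RPow_abs; apply Rmult_le_compat; try apply Rabs_pos.
  apply pow_le, Rabs_pos.
  apply pow_incr; split; [apply Rabs_pos|apply coord_le].
exact Hy.
Qed.

Lemma monom_const n (a : 'I_n -> nat) s : monom a (fun _ => s) = s ^ (\sum_(k < n) a k)%N.
Proof.
rewrite /monom; elim/big_rec2: _ => [|i y1 y2 _ ->] //; by rewrite pow_add.
Qed.

Lemma monom0 n (h : vec n) : monom (fun _ => 0%N) h = 1.
Proof. by rewrite /monom big1. Qed.

Lemma monom_ek n (k : 'I_n) (h : vec n) : monom (ek k) h = h k.
Proof.
rewrite /monom (bigD1 k) //= /ek eqxx big1 /=; first ring.
by move=> j /negbTE ->.
Qed.

Lemma pow_bound v s m : 0 <= v <= s -> 0 < s -> (2 <= m)%N -> v ^ m <= (v / s) ^ 2 * s ^ m.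
Proof.
move=> Hv Hs Hm; have -> : m = (2 + (m - 2))%N by rewrite subnKC.
rewrite !pow_add.
have -> : (v / s) ^ 2 * (s ^ 2 * s ^ (m - 2)) = v ^ 2 * s ^ (m - 2) by field; lra.
apply Rmult_le_compat_l; first by apply pow_le; lra.
by apply pow_incr.
Qed.

Lemma lim_bound (u : nat -> R) l a B :
  Un_cv u l -> (forall K, (0 < K)%N -> Rabs (u K - a) <= B) -> Rabs (l - a) <= B.
Proof.
move=> Hu HB; apply Rnot_lt_le => H.
have [N HN] := Hu (Rabs (l - a) - B) ltac:(lra).
have := HN (N.+1) ltac:(lia). have := HB N.+1 isT.
rewrite /Rdist => H1 H2.
have := Rabs_triang (l - u N.+1) (u N.+1 - a).
replace (l - u N.+1 + (u N.+1 - a)) with (l - a) by ring.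
rewrite -Rabs_Ropp Ropp_minus_distr in H2. lra.
Qed.

Lemma sum_sub_pred (I : finType) (P Q : pred I) (G : I -> R) :
  (forall i, 0 <= G i) ->
  \big[Rplus/0]_(i | P i && Q i) G i <= \big[Rplus/0]_(i | P i) G i.
Proof.
move=> H; rewrite [X in _ <= X](bigID Q) /=.
have := @sum_ge0 _ (index_enum I) (fun i => P i && ~~ Q i) G (fun i _ => H i). lra.
Qed.

Lemma est n (c : ('I_n -> nat) -> vec n) x0 h s K i : (0 < K)%N -> 0 < s -> vnorm h <= s ->
  Rabs (psum c x0 (vadd x0 h) K i - c (fun _ => 0%N) i - mulmv (fun i k => c (ek k) i) h i)
  <= (vnorm h / s) ^ 2 * psum_abs c x0 (vadd x0 (fun _ => s)) K i.
Proof.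
move=> HK Hs Hv.
have E1 : vsub (vadd x0 h) x0 = h by apply functional_extensionality => j; rewrite /vsub /vadd; ring.
have E2 : vsub (vadd x0 (fun _ => s)) x0 = (fun _ => s) by apply functional_extensionality => j; rewrite /vsub /vadd; ring.
rewrite /psum /psum_abs E1 E2.
rewrite (Gdecomp (fun a => c a i * monom a h)) //.
rewrite (Gdecomp (fun a => Rabs (c a i * monom a (fun _ => s)))) //.
rewrite monom0 Rmult_1_r /mulmv.
under eq_bigr => k _ do rewrite monom_ek.
set S := \big[Rplus/0]_(k < n) _.
set Rest := \big[Rplus/0]_(a | _) _.
replace (c (fun _ => 0%N) i + S + Rest - c (fun _ => 0%N) i - S) with Rest by ring.
have vp := vnorm_ge0 h.
set T0 := Rabs (c (fun _ => 0%N) i * _). set T1 := \big[Rplus/0]_(k < n) _. set T2 := \big[Rplus/0]_(a | _) _.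
have T0p : 0 <= T0 by apply Rabs_pos.
have T1p : 0 <= T1 by apply sum_ge0 => *; apply Rabs_pos.
have qp : 0 <= (vnorm h / s) ^ 2 by apply pow_le; apply Rmult_le_pos; [lra|apply Rlt_le, Rinv_0_lt_compat; lra].
apply Rle_trans with ((vnorm h / s) ^ 2 * T2); last first.
  have : 0 <= (vnorm h / s) ^ 2 * (T0 + T1) by apply Rmult_le_pos; lra.
  rewrite Rmult_plus_distr_l; lra.
rewrite /Rest /T2 sum_mull; eapply Rle_trans; first exact: Rabs_sum.
apply sum_le => a /andP [_ Ha].
rewrite !Rabs_mult monom_const (Rabs_pos_eq (s ^ _)); last by apply pow_le; lra.
have := monom_abs (fun k => nat_of_ord (a k)) h => Hm.
have := @pow_bound (vnorm h) s (\sum_(k < n) nat_of_ord (a k))%N ltac:(lra) Hs Ha => Hp.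
have cp := Rabs_pos (c (fun k => nat_of_ord (a k)) i).
apply Rle_trans with (Rabs (c (fun k => nat_of_ord (a k)) i) * vnorm h ^ (\sum_(k < n) nat_of_ord (a k))%N).
  by apply Rmult_le_compat_l.
apply Rle_trans with (Rabs (c (fun k => nat_of_ord (a k)) i) * ((vnorm h / s) ^ 2 * s ^ (\sum_(k < n) nat_of_ord (a k))%N)).
  by apply Rmult_le_compat_l.
right. set u := Rabs _. set w := s ^ _. set q := (_ / _) ^ 2. Show. ring.
Qed.

Lemma vnorm_const n s : 0 <= s -> vnorm (fun _ : 'I_n => s) <= s.
Proof. move=> Hs; apply vnorm_le => // j; rewrite Rabs_pos_eq; lra. Qed.

Lemma vnorm_zero n : vnorm (fun _ : 'I_n => 0) = 0.
Proof. apply Rle_antisym; [apply vnorm_const; lra|apply vnorm_ge0]. Qed.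

Lemma analytic_frechet n (f : vec n -> vec n) : analytic f -> forall x0, exists L, frechet_at f x0 L.
Proof.
move=> Haf x0; have [r [c [rp Hc]]] := Haf x0.
pose s := r / 2.
have sp : 0 < s by rewrite /s; lra.
pose y := vadd x0 (fun _ => s).
have Ey : vsub y x0 = (fun _ => s) by apply functional_extensionality => j; rewrite /y /vsub /vadd; ring.
have Hy : vnorm (vsub y x0) < r by rewrite Ey; have := @vnorm_const n s ltac:(lra); rewrite /s; lra.
have Hb : forall i, bound (fun z => exists K, z = psum_abs c x0 y K i) := fun i => proj2 (Hc y Hy i).
pose m i := proj1_sig (constructive_indefinite_description _ (Hb i)).
have Hm : forall i K, psum_abs c x0 y K i <= m i.
  move=> i K; exact: (proj2_sig (constructive_indefinite_description _ (Hb i)) _ (ex_intro _ K erefl)).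
pose M := 1 + \big[Rplus/0]_(i < n) Rabs (m i).
have Mp : 0 < M.
  have : 0 <= \big[Rplus/0]_(i < n) Rabs (m i) by apply sum_ge0 => *; apply Rabs_pos.
  rewrite /M; lra.
have HmM : forall i, m i <= M.
  move=> i; have H1 : Rabs (m i) <= \big[Rplus/0]_(i < n) Rabs (m i).
    exact: (@sum_ge_term _ (fun i => Rabs (m i)) i (fun i => Rabs_pos _)).
  have := Rle_abs (m i); rewrite /M; lra.
pose L : mat n := fun i k => c (ek k) i.
exists L.
have main : forall h, vnorm h <= s -> forall i,
    Rabs (f (vadd x0 h) i - c (fun _ => 0%N) i - mulmv L h i) <= (vnorm h / s) ^ 2 * M.
  move=> h Hh i.
  have E1 : vsub (vadd x0 h) x0 = h by apply functional_extensionality => j; rewrite /vsub /vadd; ring.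
  have Hx : vnorm (vsub (vadd x0 h) x0) < r by rewrite E1 /s in Hh *; lra.
  replace (f (vadd x0 h) i - c (fun _ => 0%N) i - mulmv L h i) with
    (f (vadd x0 h) i - (c (fun _ => 0%N) i + mulmv L h i)) by ring.
  apply: (lim_bound (proj1 (Hc _ Hx i))).
  move=> K HK.
  have H := est c x0 i HK sp Hh.
  replace (psum c x0 (vadd x0 h) K i - (c (fun _ => 0%N) i + mulmv L h i)) with
    (psum c x0 (vadd x0 h) K i - c (fun _ => 0%N) i - mulmv (fun i k => c (ek k) i) h i) by (rewrite /L; ring).
  eapply Rle_trans; first exact H.
  have vp := vnorm_ge0 h.
  apply Rmult_le_compat_l; first by apply pow_le; apply Rmult_le_pos; [lra|apply Rlt_le, Rinv_0_lt_compat; lra].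
  exact: Rle_trans (Hm i K) (HmM i).
have f0 : forall i, f x0 i = c (fun _ => 0%N) i.
  move=> i; have := main (fun _ => 0) ltac:(rewrite vnorm_zero; lra) i.
  rewrite vnorm_zero mulmv0.
  have -> : vadd x0 (fun _ => 0) = x0 by apply functional_extensionality => j; rewrite /vadd; ring.
  have -> : (0 / s) ^ 2 * M = 0 by field; lra.
  move=> H; have := Rle_abs (f x0 i - c (fun _ => 0%N) i - 0).
  have := Rle_abs (- (f x0 i - c (fun _ => 0%N) i - 0)); rewrite Rabs_Ropp; lra.
move=> eps Heps.
have dp : 0 < eps * s ^ 2 / M by apply Rdiv_lt_0_compat => //; apply Rmult_lt_0_compat => //; apply pow_lt.
exists (Rmin s (eps * s ^ 2 / M)); split; first by apply Rmin_glb_lt.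
move=> h Hh.
have vp := vnorm_ge0 h.
have h1 : vnorm h <= s by have := Rmin_l s (eps * s ^ 2 / M); lra.
have h2 : vnorm h * M <= eps * s ^ 2.
  have : vnorm h <= eps * s ^ 2 / M by have := Rmin_r s (eps * s ^ 2 / M); lra.
  move=> H; have := Rmult_le_compat_r M _ _ (Rlt_le _ _ Mp) H.
  have -> : eps * s ^ 2 / M * M = eps * s ^ 2 by field; lra. done.
have key : (vnorm h / s) ^ 2 * M <= eps * vnorm h.
  have -> : (vnorm h / s) ^ 2 * M = vnorm h * (vnorm h * M) / s ^ 2 by field; lra.
  have s2 : 0 < s ^ 2 by apply pow_lt.
  apply (Rmult_le_reg_r (s ^ 2)) => //.
  have -> : vnorm h * (vnorm h * M) / s ^ 2 * s ^ 2 = vnorm h * (vnorm h * M) by field; lra.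
  have := Rmult_le_compat_l (vnorm h) _ _ vp h2. lra.
apply vnorm_le; first by apply Rmult_le_pos; lra.
move=> i; rewrite /vsub f0.
exact: Rle_trans (main h h1 i) key.
Qed.

Lemma lin_C1 n (C : mat n) : C1 (mulmv C).
Proof.
exists (fun _ => C); split; first by move=> x; apply frechet_lin.
move=> x eps He; exists 1; split; first lra.
move=> y _ i j; rewrite Rminus_diag Rabs_R0; lra.
Qed.

Definition lin_coef n (C : mat n) (x0 : vec n) (a : 'I_n -> nat) : vec n := fun i =>
  if (\sum_(k < n) a k == 0)%N then mulmv C x0 i
  else if (\sum_(k < n) a k == 1)%N then \big[Rplus/0]_(k < n) (INR (a k) * C i k) else 0.

Lemma lin_coef0 n (C : mat n) x0 i : lin_coef C x0 (fun _ => 0%N) i = mulmv C x0 i.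
Proof. by rewrite /lin_coef big1_eq. Qed.

Lemma sum_ek n (k : 'I_n) : (\sum_(j < n) ek k j)%N = 1%N.
Proof. rewrite (bigD1 k) //= /ek eqxx big1 // => j /negbTE ->. by []. Qed.

Lemma lin_coef_ek n (C : mat n) x0 k i : lin_coef C x0 (ek k) i = C i k.
Proof.
rewrite /lin_coef sum_ek /= (bigD1 k) //= {1}/ek eqxx big1 /=; first ring.
move=> j /negbTE Hj; rewrite /ek Hj /=; ring.
Qed.

Lemma lin_psum n (C : mat n) x0 x K i (F : R -> R) : (0 < K)%N -> F 0 = 0 ->
  \big[Rplus/0]_(a : {ffun 'I_n -> 'I_K.+1} | (deg a <= K)%N)
     F (lin_coef C x0 (fun k => nat_of_ord (a k)) i * monom (fun k => nat_of_ord (a k)) (vsub x x0))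
  = F (mulmv C x0 i) + \big[Rplus/0]_(k < n) F (C i k * vsub x x0 k).
Proof.
move=> HK F0.
rewrite (Gdecomp (fun a => F (lin_coef C x0 a i * monom a (vsub x x0)))) //.
rewrite lin_coef0 monom0 Rmult_1_r.
have -> : \big[Rplus/0]_(a : {ffun 'I_n -> 'I_K.+1} | (deg a <= K)%N && (1 < deg a)%N) 
   F (lin_coef C x0 (fun k => nat_of_ord (a k)) i * monom (fun k => nat_of_ord (a k)) (vsub x x0)) = 0.
  apply big1 => a /andP [_ Ha]; rewrite /lin_coef.
  have -> : (\sum_(k < n) a k == 0)%N = false by apply/negbTE; rewrite -lt0n; exact: ltnW.
  have -> : (\sum_(k < n) a k == 1)%N = false by apply/negbTE; rewrite neq_ltn Ha orbT.
  by rewrite Rmult_0_l.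
rewrite Rplus_0_r; congr (_ + _); apply eq_bigr => k _.
by rewrite lin_coef_ek monom_ek.
Qed.

Lemma lin_analytic n (C : mat n) : analytic (mulmv C).
Proof.
move=> x0; exists 1, (lin_coef C x0); split; first lra.
move=> x _ i.
have E : forall K, (0 < K)%N -> psum (lin_coef C x0) x0 x K i = mulmv C x i.
  move=> K HK; rewrite /psum (@lin_psum _ C x0 x K i (fun r => r) HK erefl).
  change (\big[Rplus/0]_(k < n) (C i k * vsub x x0 k)) with (mulmv C (vsub x x0) i).
  rewrite mulmv_sub /vsub; ring.
split.
  move=> eps He; exists 1%nat => m Hm; rewrite E; last by apply/ltP; lia.
  rewrite /Rdist Rminus_diag Rabs_R0; lra.
pose V1 := Rabs (mulmv C x0 i) + \big[Rplus/0]_(k < n) Rabs (C i k * vsub x x0 k).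
exists (Rmax (psum_abs (lin_coef C x0) x0 x 0 i) V1) => z [K ->].
case: K => [|K]; first by apply Rmax_l.
eapply Rle_trans; last by apply Rmax_r.
rewrite /psum_abs (@lin_psum _ C x0 x K.+1 i Rabs isT Rabs_R0); rewrite /V1; lra.
Qed.

Theorem theorem9p3 (n : nat) (I : Type) (P Q : I -> mat n)
  (HP : forall r, invertible (P r)) (HQ : forall r, invertible (Q r)) :
  ((exists f : vec n -> vec n, C1_diffeo f /\
       forall (x : vec n) (r : I), f (mulmv (P r) x) = mulmv (Q r) (f x))
   <-> (exists C : mat n, invertible C /\
       forall r : I, mulmm C (P r) = mulmm (Q r) C))
  /\
  ((exists f : vec n -> vec n, analytic_diffeo f /\
       forall (x : vec n) (r : I), f (mulmv (P r) x) = mulmv (Q r) (f x))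
   <-> (exists C : mat n, invertible C /\
       forall r : I, mulmm C (P r) = mulmm (Q r) C)).
Proof.
split; split.
- move=> [f [[g [gf [fg [[Df [HDf _]] [Dg [HDg _]]]]]] eqv]].
  apply: (key (g := g) _ _ gf fg eqv).
    by move=> x; exists (Df x).
  by move=> x; exists (Dg x).
- move=> [C [[D [CD DC]] comm]]; exists (mulmv C); split.
    exists (mulmv D); split; first by move=> x; rewrite -mulmv_mulmm DC mulmv_id.
    split; first by move=> x; rewrite -mulmv_mulmm CD mulmv_id.
    split; apply lin_C1.
  by move=> x r; rewrite -!mulmv_mulmm comm.
- move=> [f [[g [gf [fg [Af Ag]]]] eqv]].
  exact: (key (g := g) (analytic_frechet Af) (analytic_frechet Ag) gf fg eqv).
- move=> [C [[D [CD DC]] comm]]; exists (mulmv C); split.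
    exists (mulmv D); split; first by move=> x; rewrite -mulmv_mulmm DC mulmv_id.
    split; first by move=> x; rewrite -mulmv_mulmm CD mulmv_id.
    split; apply lin_analytic.
  by move=> x r; rewrite -!mulmv_mulmm comm.
Qed.
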